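(* Let $(Y,\preceq,\prec,\to)$ be a normal solid vector space. Then: (C8) each subsequence of a convergent sequence converges to the same limit; (C9) the convergence of a sequence and its limit do not depend on finitely many of its terms; (C10) if $\lambda_n\to\lambda$ in $\mathbb R$ and $x_n\to x$, then $\lambda_nx_n\to\lambda x$; (C11) if $\lambda_n\to0$ in $\mathbb R$ and $(x_n)$ is bounded in $Y$ (there exist $a,b\in Y$ with $a\preceq x_n\preceq b$ for all $n$), then $\lambda_nx_n\to0$; (C12) if $(\lambda_n)$ is a bounded real sequence and $x_n\to0$, then $\lambda_nx_n\to0$; (C13) for every sequence $(x_n)$ in $Y$ and $x\in Y$, $x_n\to x$ if and only if for every $c\succ0$ there exists $N\in\mathbb N$ with $x-c\prec x_n\prec x+c$ for all $n>N$.
   Context: Vector space with convergence: a real vector space $Y$ with a relation $\to$ between sequences in $Y$ and points of $Y$ (uniqueness of limits not assumed) such that (C1) $x_n\to x$, $y_n\to y$ imply $x_n+y_n\to x+y$; (C2) $x_n\to x$, $\lambda\in\mathbb R$ imply $\lambda x_n\to\lambda x$; (C3) $\lambda_n\to\lambda$ in $\mathbb R$ imply $\lambda_n x\to\lambda x$. $A\subseteq Y$ is open if $x_n\to x\in A$ implies $x_n\in A$ for all but finitely many $n$; closed if $x_n\to x$, $x_n\in A$ $\forall n$ imply $x\in A$; $A^\circ$ is the union of all open subsets of $A$. A cone is a nonempty closed $K$ with $\lambda K\subseteq K$ ($\lambda\ge0$), $K+K\subseteq K$, $K\cap(-K)=\{0\}$; solid if $K\ne\{0\}$, $K^\circ\ne\emptyset$.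 A vector ordering is a partial order $\preceq$ with (V1) $x\preceq y\Rightarrow x+z\preceq y+z$; (V2) $\lambda\ge0$, $x\preceq y\Rightarrow\lambda x\preceq\lambda y$; (V3) $x_n\to x$, $y_n\to y$, $x_n\preceq y_n$ $\forall n\Rightarrow x\preceq y$. Solid vector space: positive cone $K=\{x:x\succeq0\}$ solid, with $x\prec y$ iff $y-x\in K^\circ$. Normal: whenever $x_n\preceq y_n\preceq z_n$ for all $n$, $x_n\to x$ and $z_n\to x$, then $y_n\to x$. *)

(* Defs.v *)
From HB Require Import structures.
From mathcomp Require Import all_boot all_order all_algebra.
From mathcomp Require Import all_classical all_reals all_analysis.
Set Implicit Arguments. Unset Strict Implicit. Unset Printing Implicit Defensive.
Import Order.TTheory GRing.Theory Num.Theory numFieldNormedType.Exports.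
Local Open Scope classical_set_scope.
Local Open Scope ring_scope.

Section VSC.
Variables (R : realType) (Y : lmodType R).
Variable conv : (nat -> Y) -> Y -> Prop.   (* x_n -> x, limits not unique *)
Variable le : Y -> Y -> Prop.

Definition vsc_axioms : Prop :=
  [/\ (forall (x y : nat -> Y) (a b : Y), conv x a -> conv y b ->
         conv (fun n => x n + y n) (a + b)),
      (forall (x : nat -> Y) (a : Y) (l : R), conv x a ->
         conv (fun n => l *: x n) (l *: a)) &
      (forall (lam : nat -> R) (l : R) (x : Y), lam @ \oo --> l ->
         conv (fun n => lam n *: x) (l *: x))].

Definition conv_open (A : set Y) : Prop :=
  forall (x : nat -> Y) (a : Y), conv x a -> A a ->
    exists N : nat, forall n, (N <= n)%N -> A (x n).

Definition conv_closed (A : set Y) : Prop :=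
  forall (x : nat -> Y) (a : Y), conv x a -> (forall n, A (x n)) -> A a.

Definition conv_interior (A : set Y) : set Y :=
  fun a => exists U : set Y, [/\ conv_open U, U `<=` A & U a].

Definition is_cone (K : set Y) : Prop :=
  [/\ K !=set0, conv_closed K,
      (forall (l : R) (x : Y), 0 <= l -> K x -> K (l *: x)),
      (forall x y, K x -> K y -> K (x + y)) &
      K `&` [set - x | x in K] = [set 0]].

Definition is_solid_cone (K : set Y) : Prop :=
  [/\ is_cone K, K <> [set 0] & conv_interior K !=set0].

Definition vector_ordering : Prop :=
  [/\ (forall x, le x x) /\
      (forall x y, le x y -> le y x -> x = y) /\
      (forall x y z, le x y -> le y z -> le x z),
      (forall x y z, le x y -> le (x + z) (y + z)),
      (forall (l : R) x y, 0 <= l -> le x y -> le (l *: x) (l *: y)) &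
      (forall (x y : nat -> Y) (a b : Y), conv x a -> conv y b ->
         (forall n, le (x n) (y n)) -> le a b)].

Definition pos_cone : set Y := fun x => le 0 x.

Definition slt (x y : Y) : Prop := conv_interior pos_cone (y - x).

Definition normal : Prop :=
  forall (x y z : nat -> Y) (a : Y),
    (forall n, le (x n) (y n) /\ le (y n) (z n)) ->
    conv x a -> conv z a -> conv y a.

Definition normal_solid_vector_space : Prop :=
  [/\ vsc_axioms, vector_ordering, is_solid_cone pos_cone & normal].

End VSC.

(* Main.v *)
Require Import Defs.
From HB Require Import structures.
From mathcomp Require Import all_boot all_order all_algebra.
From mathcomp Require Import all_classical all_reals all_analysis.
From mathcomp Require Import zify lra.
Import Order.TTheory GRing.Theory Num.Theory numFieldNormedType.Exports.
Local Open Scope classical_set_scope.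
Local Open Scope ring_scope.

Theorem theorem7p10 (R : realType) (Y : lmodType R)
  (conv : (nat -> Y) -> Y -> Prop) (le : Y -> Y -> Prop)
  (HY : normal_solid_vector_space conv le) :
  (* (C8) *)
  (forall (x : nat -> Y) (a : Y) (phi : nat -> nat),
     (forall n, (phi n < phi n.+1)%N) -> conv x a -> conv (x \o phi) a) /\
  (* (C9) *)
  (forall (x y : nat -> Y) (a : Y),
     (exists N : nat, forall n, (N <= n)%N -> x n = y n) ->
     (conv x a <-> conv y a)) /\
  (forall (x : nat -> Y) (a : Y) (k : nat),
     conv x a <-> conv (fun n => x (n + k)%N) a) /\
  (* (C10) *)
  (forall (lam : nat -> R) (l : R) (x : nat -> Y) (a : Y),
     lam @ \oo --> l -> conv x a -> conv (fun n => lam n *: x n) (l *: a)) /\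
  (* (C11) *)
  (forall (lam : nat -> R) (x : nat -> Y),
     lam @ \oo --> (0 : R) ->
     (exists a b : Y, forall n, le a (x n) /\ le (x n) b) ->
     conv (fun n => lam n *: x n) 0) /\
  (* (C12) *)
  (forall (lam : nat -> R) (x : nat -> Y),
     (exists M : R, forall n, `|lam n| <= M) ->
     conv x 0 -> conv (fun n => lam n *: x n) 0) /\
  (* (C13) *)
  (forall (x : nat -> Y) (a : Y),
     conv x a <->
     (forall c : Y, slt conv le 0 c ->
        exists N : nat, forall n, (N < n)%N ->
          slt conv le (a - c) (x n) /\ slt conv le (x n) (a + c))).
Proof.
case: HY => [[C1 C2 C3] [[Lrefl [Lanti Ltrans]] V1 V2 V3]
  [[_ _ Kscale Kadd _] _ [c0 c0int]] Nrm].
have ccst : forall l : R, (fun=> l) @ \oo --> l by move=> l; exact: cvg_cst.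
have cst : forall z : Y, conv (fun=> z) z.
  move=> z; have h := C3 (fun=> 1) 1 z (ccst 1).
  have E : (fun _ : nat => (1:R) *: z) = fun=> z.
    by apply/funext=> n; rewrite scale1r.
  by rewrite /= E scale1r in h.
have leK : forall x y, le x y <-> pos_cone le (y - x).
  move=> x y; split => hl.
    by have := V1 _ _ (-x) hl; rewrite subrr.
  by have := V1 _ _ x hl; rewrite add0r subrK.
have intK : forall u, conv_interior conv (pos_cone le) u -> pos_cone le u.
  by move=> u [U [_ UK Uu]]; exact: UK.
have sltle : forall x y, slt conv le x y -> le x y.
  by move=> x y h; apply/leK; apply: intK; exact: h.
have Kopen : forall (x : nat -> Y) a, conv x a -> conv_interior conv (pos_cone le) a ->
    exists N, forall n, (N <= n)%N -> conv_interior conv (pos_cone le) (x n).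
  move=> x a xa [U [Uo UK Ua]]; have [N HN] := Uo x a xa Ua.
  by exists N => n Nn; exists U; split=> //; exact: HN.
have Kscale_i : forall t u, 0 < t -> conv_interior conv (pos_cone le) u ->
    conv_interior conv (pos_cone le) (t *: u).
  move=> t u t0 [U [Uo UK Uu]].
  exists [set y | U (t^-1 *: y)]; split.
  - by move=> x a xa /= Ua; exact: (Uo _ _ (C2 _ _ t^-1 xa) Ua).
  - move=> y /= /UK Ky; have := Kscale t _ (ltW t0) Ky.
    by rewrite scalerA mulfV ?gt_eqF // scale1r.
  - by rewrite /= scalerA mulVf ?gt_eqF // scale1r.
have Ktrans : forall u k, conv_interior conv (pos_cone le) u -> pos_cone le k ->
    conv_interior conv (pos_cone le) (u + k).
  move=> u k [U [Uo UK Uu]] Kk; exists [set y | U (y - k)]; split.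
  - by move=> x a xa /= Ua; exact: (Uo _ _ (C1 _ _ _ _ xa (cst (-k))) Ua).
  - by move=> y /= /UK Ky; have := Kadd _ _ Ky Kk; rewrite subrK.
  - by rewrite /= addrK.
have OU : forall cc y, conv_interior conv (pos_cone le) cc -> exists t : R, 0 <= t /\ le (- (t *: cc)) y /\ le y (t *: cc).
  move=> cc y ci.
  have hm : (fun n : nat => - (n.+1%:R^-1 : R)) @ \oo --> (0:R).
    by rewrite -oppr0; apply: cvgN; exact: cvg_harmonic.
  have h1 : conv (fun n => cc + (- (n.+1%:R^-1 : R)) *: y) cc.
    by have := C1 _ _ _ _ (cst cc) (C3 _ 0 y hm); rewrite scale0r addr0.
  have h2 : conv (fun n => cc + (n.+1%:R^-1 : R) *: y) cc.
    by have := C1 _ _ _ _ (cst cc) (C3 _ 0 y (@cvg_harmonic R)); rewrite scale0r addr0.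
  have [N1 HN1] := Kopen _ _ h1 ci; have [N2 HN2] := Kopen _ _ h2 ci.
  have k1 := intK _ (HN1 (maxn N1 N2) (leq_maxl _ _)).
  have k2 := intK _ (HN2 (maxn N1 N2) (leq_maxr _ _)).
  exists (maxn N1 N2).+1%:R; split => //; split; apply/leK.
  - have := Kscale (maxn N1 N2).+1%:R _ (ler0n _ _) k2.
    by rewrite scalerDr scalerA mulfV // scale1r opprK addrC.
  - have := Kscale (maxn N1 N2).+1%:R _ (ler0n _ _) k1.
    by rewrite scalerDr scalerA mulrN mulfV // scaleNr scale1r.
have L0 : forall c z (t mu : R), conv_interior conv (pos_cone le) c -> 0 <= mu ->
    mu * t < 1 -> le z (t *: c) -> conv_interior conv (pos_cone le) (c - mu *: z).
  move=> c z t mu ci mu0 mt zc.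
  have -> : c - mu *: z = (1 - mu * t) *: c + mu *: (t *: c - z).
    by rewrite scalerBr scalerA scalerBl scale1r [RHS]addrA subrK.
  apply: Ktrans; first by apply: (Kscale_i _ _ _ ci); rewrite subr_gt0.
  exact: (Kscale _ _ mu0 (proj1 (leK _ _) zc)).
have L1 : forall c y (t mu : R), conv_interior conv (pos_cone le) c ->
    le (- (t *: c)) y -> le y (t *: c) -> `|mu| * t < 1 ->
    conv_interior conv (pos_cone le) (c - mu *: y).
  move=> c y t mu ci h1 h2 ht.
  case: (lerP 0 mu) => mu0.
    by apply: (L0 c y t mu ci mu0 _ h2); rewrite -(ger0_norm mu0).
  have -> : mu *: y = (-mu) *: (-y) by rewrite scalerN scaleNr opprK.
  apply: (L0 c (-y) t (-mu) ci).
  - by rewrite oppr_ge0 ltW.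
  - by rewrite -(ltr0_norm mu0).
  - by apply/leK; rewrite opprK addrC; have := proj1 (leK _ _) h1; rewrite opprK.
have L : forall c y (t mu : R), conv_interior conv (pos_cone le) c ->
    le (- (t *: c)) y -> le y (t *: c) -> `|mu| * t < 1 ->
    conv_interior conv (pos_cone le) (c - mu *: y) /\
    conv_interior conv (pos_cone le) (c + mu *: y).
  move=> c y t mu ci h1 h2 ht; split; first exact: L1 h1 h2 ht.
  have -> : c + mu *: y = c - (-mu) *: y by rewrite scaleNr opprK.
  by apply: (L1 c y t (-mu) ci h1 h2); rewrite normrN.
have C13 : forall (x : nat -> Y) (a : Y),
     conv x a <->
     (forall c : Y, slt conv le 0 c ->
        exists N : nat, forall n, (N < n)%N ->
          slt conv le (a - c) (x n) /\ slt conv le (x n) (a + c)).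
  move=> x a; split.
    move=> xa c; rewrite /slt subr0 => ci.
    have h1 : conv (fun n => x n + (c - a)) c.
      by have := C1 _ _ _ _ xa (cst (c - a)); rewrite [a + _]addrC subrK.
    have h2 : conv (fun n => (-1) *: x n + (a + c)) c.
      by have := C1 _ _ _ _ (C2 _ _ (-1) xa) (cst (a + c)); rewrite scaleN1r addKr.
    have [N1 HN1] := Kopen _ _ h1 ci; have [N2 HN2] := Kopen _ _ h2 ci.
    exists (maxn N1 N2) => n hn; split.
      rewrite /slt opprB; apply: HN1.
      exact: leq_trans (leq_maxl _ _) (ltnW hn).
    have := HN2 n (leq_trans (leq_maxr _ _) (ltnW hn)).
    by rewrite /slt scaleN1r addrC.
  move=> H.
  have ckpos : forall k : nat, slt conv le 0 ((k.+1%:R : R)^-1 *: c0).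
    by move=> k; rewrite /slt subr0; apply: Kscale_i => //; rewrite invr_gt0.
  have [N HN] := choice (fun k => H _ (ckpos k)).
  pose S n (t : R) := 0 <= t /\ le (a - t *: c0) (x n) /\ le (x n) (a + t *: c0).
  have claim : forall n m, exists t, S n t /\
      forall k, (k < m)%N -> (N k + k < n)%N -> t <= (k.+1%:R : R)^-1.
    move=> n; elim=> [|m [t [St Ht]]].
      have [t [t0 [h1 h2]]] := OU c0 (x n - a) c0int.
      exists t; split => //; split => //; split.
        by have := V1 _ _ a h1; rewrite subrK addrC.
      by have := V1 _ _ a h2; rewrite subrK addrC.
    case: (ltnP (N m + m) n) => hm.
      have Sm : S n (m.+1%:R^-1).
        have [h1 h2] := HN m n (leq_ltn_trans (leq_addr m (N m)) hm).
        by split; [rewrite invr_ge0 | split; apply: sltle].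
      case: (lerP t m.+1%:R^-1) => tm.
        exists t; split => // k; rewrite ltnS leq_eqVlt => /orP [/eqP -> _ // | km].
        exact: Ht.
      exists m.+1%:R^-1; split => // k; rewrite ltnS leq_eqVlt.
      move=> /orP [/eqP -> _ // | km hk].
      exact: le_trans (ltW tm) (Ht k km hk).
    exists t; split => // k; rewrite ltnS leq_eqVlt => /orP [/eqP -> hk | km].
      by rewrite ltnNge hm in hk.
    exact: Ht.
  have [eps Heps] := choice (fun n => claim n n).
  have eps0 : eps @ \oo --> (0:R).
    apply/cvgr0Pnorm_lt => e e0.
    have := @cvg_harmonic R; move/cvgr0Pnorm_lt/(_ e e0) => [k _ hk].
    exists (N k + k).+1 => // n hn /=.
    have [[e0' _] Hb] := Heps n.
    rewrite ger0_norm //; apply: le_lt_trans (Hb k _ _) _.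
    - by apply: leq_trans hn; rewrite ltnS leq_addl.
    - exact: hn.
    - by have := hk k (leqnn k); rewrite /harmonic /= ger0_norm // invr_ge0.
  have lo : conv (fun n => a + (- eps n) *: c0) a.
    have e1 : (fun n => - eps n) @ \oo --> (0:R).
      by rewrite -oppr0; apply: cvgN; exact: eps0.
    by have := C1 _ _ _ _ (cst a) (C3 _ 0 c0 e1); rewrite scale0r addr0.
  have up : conv (fun n => a + eps n *: c0) a.
    by have := C1 _ _ _ _ (cst a) (C3 _ 0 c0 eps0); rewrite scale0r addr0.
  apply: (Nrm _ _ _ a _ lo up) => n.
  by have [[_ [h1 h2]] _] := Heps n; rewrite scaleNr.
have C12 : forall (lam : nat -> R) (x : nat -> Y),
     (exists M : R, forall n, `|lam n| <= M) ->
     conv x 0 -> conv (fun n => lam n *: x n) 0.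
  move=> lam x [M HM] x0; apply/C13 => c hc.
  have ci : conv_interior conv (pos_cone le) c by move: hc; rewrite /slt subr0.
  have M0 : 0 <= M := le_trans (normr_ge0 _) (HM 0%N).
  have Mp : 0 < M + 1 by rewrite ltr_wpDl.
  have hc' : slt conv le 0 ((M + 1)^-1 *: c).
    by rewrite /slt subr0; apply: Kscale_i => //; rewrite invr_gt0.
  have [N HN] := (C13 x 0).1 x0 _ hc'.
  exists N => n hn; have [h1 h2] := HN n hn.
  rewrite sub0r in h1; rewrite add0r in h2.
  have ht : `|lam n| * (M + 1)^-1 < 1.
    rewrite ltr_pdivrMr // mul1r; apply: le_lt_trans (HM n) _; by rewrite ltrDl.
  have [k1 k2] := L c (x n) (M + 1)^-1 (lam n) ci (sltle _ _ h1) (sltle _ _ h2) ht.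
  by rewrite /slt sub0r opprK addrC add0r.
split.
  move=> x a phi hphi xa; apply/C13 => c hc.
  have [N HN] := (C13 x a).1 xa c hc.
  have phin : forall n, (n <= phi n)%N.
    by elim=> [//|n IH]; exact: leq_ltn_trans IH (hphi n).
  by exists N => n hn; apply: HN; exact: leq_trans hn (phin n).
have C9 : forall x y a, (exists N, forall n, (N <= n)%N -> x n = y n) ->
    conv x a -> conv y a.
  move=> x y a [N0 H0] xa; apply/C13 => c hc.
  have [N HN] := (C13 x a).1 xa c hc.
  exists (maxn N N0) => n hn; rewrite -H0; first apply: HN.
  - exact: leq_ltn_trans (leq_maxl _ _) hn.
  - exact: ltnW (leq_ltn_trans (leq_maxr _ _) hn).
split.
  move=> x y a [N H]; split; apply: C9; exists N => n hn; [exact: H | exact/esym/H].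
split.
  move=> x a k; split => xa; apply/C13 => c hc.
    have [N HN] := (C13 x a).1 xa c hc; exists N => n hn; apply: HN.
    exact: leq_trans hn (leq_addr k n).
  have [N HN] := (C13 _ a).1 xa c hc; exists (N + k)%N => n hn.
  have kn : (k <= n)%N by lia.
  have := HN (n - k)%N; rewrite subnK //; apply; lia.
split.
  move=> lam l x a hl xa.
  have [M HM] : exists M, forall n, `|lam n| <= M.
    have := cvg_seq_bounded (cvgP _ hl).
    move=> [M [Mreal]] /(_ (`|M| + 1)).
    rewrite (le_lt_trans (ler_norm _)) ?ltrDl// => /(_ erefl) aM.
    by exists (`|M| + 1) => n; apply: aM.
  have h1 : conv (fun n => lam n *: (x n - a)) 0.
    apply: C12; first by exists M.
    by have := C1 _ _ _ _ xa (cst (-a)); rewrite subrr.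
  have h2 : conv (fun n => (lam n - l) *: a) 0.
    have hl' : (fun n => lam n - l) @ \oo --> (0:R).
      have := cvgB hl (ccst l); rewrite subrr; exact.
    by have := C3 _ 0 a hl'; rewrite scale0r.
  have := C1 _ _ _ _ (C1 _ _ _ _ h1 h2) (cst (l *: a)); rewrite !add0r.
  have -> : (fun n => lam n *: (x n - a) + (lam n - l) *: a + l *: a) =
    (fun n => lam n *: x n).
    by apply/funext => n; rewrite scalerBr scalerBl addrA subrK subrK.
  by [].
split.
  move=> lam x hl [a [b hab]]; apply/C13 => c hc.
  have ci : conv_interior conv (pos_cone le) c by move: hc; rewrite /slt subr0.
  have [ta [ta0 [ha _]]] := OU c a ci; have [tb [tb0 [_ hb]]] := OU c b ci.
  have cK := intK _ ci.
  have lo : forall n, le (-((ta + tb) *: c)) (x n).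
    move=> n; apply: (Ltrans _ a _ _ (proj1 (hab n))); apply: (Ltrans _ _ _ _ ha).
    apply/leK; rewrite opprK scalerDl addKr; exact: Kscale _ _ tb0 cK.
  have up : forall n, le (x n) ((ta + tb) *: c).
    move=> n; apply: (Ltrans _ b _ (proj2 (hab n))); apply: (Ltrans _ _ _ hb).
    apply/leK; rewrite scalerDl addrK; exact: Kscale _ _ ta0 cK.
  have tp : 0 < (ta + tb + 1)^-1 by rewrite invr_gt0; lra.
  move: hl; move/cvgr0Pnorm_lt/(_ _ tp) => [N _ HN].
  exists N => n hn.
  have ht : `|lam n| * (ta + tb) < 1.
    have h := HN n (ltnW hn).
    have tp1 : 0 < ta + tb + 1 by lra.
    have h' : `|lam n| * (ta + tb + 1) < 1.
      by rewrite -[X in _ < X](mulVf (lt0r_neq0 tp1)) ltr_pM2r.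
    apply: le_lt_trans h'; rewrite ler_wpM2l //; lra.
  have [k1 k2] := L c (x n) (ta + tb) (lam n) ci (lo n) (up n) ht.
  by rewrite /slt sub0r opprK addrC add0r.
by split.
Qed.
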